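(* Let $A,B,C$ be the observer canonical realization (described in the context) of a plant $b(s)/a(s)$ that is stable (i.e. $A$ is Hurwitz) and has positive DC gain. Then the first exit map $\psi_+(\xi;1)$ is defined for every $\xi\in\mathbb{R}^n$.
   Context: The plant transfer function is $\frac{b(s)}{a(s)}=\frac{b_{n-1}s^{n-1}+\dots+b_0}{s^n+a_{n-1}s^{n-1}+\dots+a_0}$ with real coefficients. Its observer canonical realization is: $A$ is the $n\times n$ matrix with $A_{i+1,i}=1$ for $i=1,\dots,n-1$, last column $(-a_0,\dots,-a_{n-1})^T$, other entries zero; $B=(b_0,\dots,b_{n-1})^T$; $C=(0,\dots,0,1)$. The DC gain is $b_0/a_0$. The first exit time is $\tau_+(\xi)=\inf\{t>0: Cx(t)<0\}$ where $\dot x=Ax-B$, $x(0)=\xi$; the first exit map is $\psi_+(\xi;1)=x(\tau_+(\xi))$, defined at every point whose trajectory crosses the hyperplane $\{Cx=0\}$ in finite time. *)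

(* Defs.v *)
From HB Require Import structures.
From mathcomp Require Import all_boot all_order all_algebra.
From mathcomp Require Import all_classical all_reals all_analysis.
From mathcomp Require Import complex.
Set Implicit Arguments. Unset Strict Implicit. Unset Printing Implicit Defensive.
Import Order.TTheory GRing.Theory Num.Theory.
Import numFieldNormedType.Exports.
Local Open Scope ring_scope.

(* Observer canonical realization of b(s)/a(s), with n = m.+1 states,
   a(s) = s^n + a_{n-1} s^{n-1} + ... + a_0 (coefficients a i, i < n),
   b(s) = b_{n-1} s^{n-1} + ... + b_0 (coefficients b i, i < n).
   Indices are 0-based: paper's A_{i+1,i} = 1 becomes A (i+1) i = 1,
   last column is (-a_0, ..., -a_{n-1})^T. *)
Definition obsA (R : realType) (m : nat) (a : 'I_m.+1 -> R) : 'M[R]_m.+1 :=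
  \matrix_(i, j) (if j == ord_max then - a i
                  else if val i == (val j).+1 then 1 else 0).

Definition obsB (R : realType) (m : nat) (b : 'I_m.+1 -> R) : 'cV[R]_m.+1 :=
  \col_i b i.

Definition obsC (R : realType) (m : nat) : 'rV[R]_m.+1 :=
  \row_j (if j == ord_max then 1 else 0).

Definition hurwitz (R : realType) (m : nat) (A : 'M[R]_m.+1) : Prop :=
  forall z : R[i], root (char_poly (map_mx (fun x : R => (x%:C)%C) A)) z ->
    complex.Re z < 0.

Definition is_traj (R : realType) (m : nat) (A : 'M[R]_m.+1) (B : 'cV[R]_m.+1)
  (xi : 'cV[R]_m.+1) (x : R -> 'cV[R]_m.+1) : Prop :=
  x 0 = xi /\ forall t : R, is_derive t 1 x (A *m x t - B).

(* psi_+(xi;1) is defined: the set {t > 0 | C x(t) < 0} is nonempty,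
   so tau_+(xi) = inf of it is finite. *)
Definition exit_defined (R : realType) (m : nat) (A : 'M[R]_m.+1)
  (B : 'cV[R]_m.+1) (C : 'rV[R]_m.+1) (xi : 'cV[R]_m.+1) : Prop :=
  forall x, is_traj A B xi x -> exists t : R, 0 < t /\ (C *m x t) 0 0 < 0.

(* Main.v *)
Require Import Defs.
From HB Require Import structures.
From mathcomp Require Import all_boot all_order all_algebra.
From mathcomp Require Import all_classical all_reals all_analysis.
From mathcomp Require Import complex ring lra.
Import Order.TTheory GRing.Theory Num.Theory.
Import numFieldNormedType.Exports.
Local Open Scope ring_scope.
Set Implicit Arguments. Unset Strict Implicit.


Section An0.
Variable R : realType.

Lemma is_derive_lin (g t : R) : is_derive t 1 (fun s : R => g * s) g.
Proof.
have := @is_deriveZ R R R id g t 1 1 (is_derive_id _ _).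
by rewrite /GRing.scale /= mulr1.
Qed.

Lemma is_derive_expM (g t : R) :
  is_derive t 1 (fun s => expR (g * s)) (g * expR (g * t)).
Proof.
have h1 : derivable (fun s : R => g * s) t 1.
  by apply: ex_derive; apply: is_derive_lin.
have h2 : derivable (@expR R) (g * t) 1 by exact: derivable_expR.
apply: DeriveDef.
  by rewrite (_ : (fun s => expR (g * s)) = (@expR R) \o (fun s => g * s)) //.
rewrite -derive1E.
rewrite (_ : (fun s => expR (g * s)) = (@expR R) \o (fun s => g * s)) //.
rewrite derive1_comp // !derive1E (@derive_val _ _ _ _ _ _ _ (is_derive_expR _)).
by rewrite (@derive_val _ _ _ _ _ _ _ (is_derive_lin _ _)) mulrC.
Qed.
End An0.


Section An.
Variable R : realType.

Lemma gron (V dV : R -> R) (k e T : R) : 0 < k ->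
  (forall t : R, is_derive t 1 V (dV t)) ->
  (forall t, T <= t -> dV t <= - k * V t + k * e) ->
  forall t, T <= t -> V t <= e + expR (k * (T - t)) * (V T - e).
Proof.
move=> k0 hdV hle t Tt.
pose W := ((fun s => expR (k * s)) * (V - cst e)) : R -> R.
have dW (s : R) : is_derive s 1 W (expR (k * s) * dV s + (V s - e) * (k * expR (k * s))).
  apply: is_derive_eq.
  rewrite /= subr0.
  by rewrite /GRing.scale /= mulr1 [expR _ * k]mulrC.
have [c cT hc] := MVT_segment Tt (fun x _ => dW x)
   (derivable_within_continuous (fun x _ => @ex_derive _ _ _ _ _ _ _ (dW x))).
have hc0 : expR (k * c) * dV c + (V c - e) * (k * expR (k * c)) <= 0.
  have := hle c (andP (cT : T <= c <= t)).1.
  have := expR_gt0 (k * c).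
  move=> h1 h2; nra.
have : W t <= W T.
  rewrite -subr_le0 hc; apply: mulr_le0_ge0 => //; rewrite subr_ge0 //.
move=> hW.
have hW' : expR (k*t) * (V t - e) <= expR (k*T) * (V T - e) := hW.
have et := expR_gt0 (k * t).
have hE : expR (k*T) = expR (k*(T-t)) * expR (k*t).
  by rewrite -expRD; congr expR; ring.
rewrite hE in hW'.
nra.
Qed.
End An.


Section An2.
Variable R : realType.

Definition tends0 (f : R -> R) :=
  forall e : R, 0 < e -> exists T : R, forall t, T <= t -> `|f t| < e.

Lemma tends0_max {f1 f2 : R -> R} {e : R} : tends0 f1 -> tends0 f2 -> 0 < e ->
  exists T : R, forall t, T <= t -> `|f1 t| < e /\ `|f2 t| < e.
Proof.
move=> h1 h2 e0; have [T1 H1] := h1 e e0; have [T2 H2] := h2 e e0.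
exists (Num.max T1 T2) => t; rewrite ge_max => /andP[a b]; split.
  exact: H1. exact: H2.
Qed.

Lemma rot_tends0 (u v f1 f2 : R -> R) (al be : R) : al < 0 ->
  (forall t : R, is_derive t 1 u (al * u t - be * v t + f1 t)) ->
  (forall t : R, is_derive t 1 v (be * u t + al * v t + f2 t)) ->
  tends0 f1 -> tends0 f2 -> tends0 u /\ tends0 v.
Proof.
move=> al0 hu hv h1 h2.
pose g := - al.
have g0 : 0 < g by rewrite /g oppr_gt0.
pose V := (u * u + v * v : R -> R).
pose dV := fun s => 2 * (u s * (al * u s - be * v s + f1 s) + v s * (be * u s + al * v s + f2 s)).
have hV (s : R) : is_derive s 1 V (dV s).
  apply: is_derive_eq; rewrite /dV /GRing.scale /=; ring.
have sq (y : R) : `|y| * `|y| = y * y.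
  by rewrite -normrM ger0_norm // -expr2 sqr_ge0.
suff key : forall ep, 0 < ep -> exists T, forall t, T <= t -> V t < ep.
  split => e e0; have [T HT] := key (e * e) (mulr_gt0 e0 e0); exists T => t /HT h;
  have h' : u t * u t + v t * v t < e * e := h;
  rewrite ltNge; apply/negP => he;
  have := sqr_ge0 (v t); have := sqr_ge0 (u t); rewrite !expr2;
  [have := sq (u t) | have := sq (v t)]; nra.
move=> ep ep0.
pose eta := Num.min 1 (g * g * ep / 4).
have eta0 : 0 < eta by rewrite lt_min ltr01 /= !mulr_gt0 // invr_gt0.
have [T0 HT0] := tends0_max h1 h2 eta0.
have hle : forall t, T0 <= t -> dV t <= - g * V t + g * (ep / 2).
  move=> t /HT0 [a b].
  have e1 : eta <= 1 by rewrite ge_min lexx.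
  have e2 : eta <= g * g * ep / 4 by rewrite ge_min lexx orbT.
  have q1 : f1 t * f1 t <= g * g * ep / 4.
    rewrite -sq; have := normr_ge0 (f1 t); nra.
  have q2 : f2 t * f2 t <= g * g * ep / 4.
    rewrite -sq; have := normr_ge0 (f2 t); nra.
  have s1 := sqr_ge0 (g * u t - f1 t); have s2 := sqr_ge0 (g * v t - f2 t).
  rewrite /dV /V /= /g; rewrite /g in q1 q2 s1 s2 g0.
  rewrite !expr2 in s1 s2.
  have -> : (u * u + v * v) t = u t * u t + v t * v t by [].
  rewrite -subr_ge0 -(pmulr_rge0 _ g0).
  nra.
have G := @gron R V dV g (ep / 2) T0 g0 hV hle.
pose M := `|V T0 - ep / 2|.
exists (T0 + 2 * M / (ep * g) ) => t ht.
have Tt : T0 <= t.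
  apply: le_trans ht; rewrite lerDl !mulr_ge0 //; first by rewrite /M normr_ge0.
  by rewrite invr_ge0 mulr_ge0 // ltW.
have := G t Tt.
set x := expR _.
have x0 : 0 < x by apply: expR_gt0.
have hx : x * expR (g * (t - T0)) = 1.
  by rewrite /x -expRD -expR0; congr expR; ring.
have hx2 := expR_ge1Dx (g * (t - T0)).
have hM : V T0 - ep / 2 <= M by rewrite /M ler_norm.
have M0 : 0 <= M by rewrite /M normr_ge0.
have hd : 2 * M <= ep * g * (t - T0).
  have eg : 0 < ep * g by rewrite mulr_gt0.
  have -> : 2 * M = (ep * g) * (2 * M / (ep * g)).
    by rewrite [RHS]mulrC divfK // gt_eqF.
  rewrite ler_pM2l //; lra.
have hd' : 2 * M <= ep * (g * (t - T0)) by rewrite mulrA.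
set D := g * (t - T0) in hx hx2 hd'.
have h3 : x * (V T0 - ep / 2) <= x * M by rewrite ler_wpM2l // ltW.
have h4 : x * (1 + D) <= 1 by rewrite -[X in _ <= X]hx ler_wpM2l // ltW.
have h5 : x * (2 * M) <= x * (ep * D) by apply: ler_wpM2l; [exact: ltW|exact: hd'].
have h6 : 0 < x * ep by rewrite mulr_gt0.
have h7 : ep * (x * (1 + D)) <= ep by rewrite ler_piMr // ltW.
move=> hV'; nra.
Qed.
End An2.


Section Mx.
Variable R : realType.
Variable m : nat.

Lemma comp_deriv (x : R -> 'cV[R]_m.+1) (dx : 'cV[R]_m.+1) (t : R) (w : 'rV[R]_m.+1) :
  is_derive t 1 x dx -> is_derive t 1 (fun s => (w *m x s) 0 0) ((w *m dx) 0 0).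
Proof.
move=> hx.
have hd : derivable x t 1 := @ex_derive _ _ _ _ _ _ _ hx.
have hD := derive_mx hd; rewrite derive_val in hD.
have hc := (derivable_mxP x t 1).1 hd.
have di : forall j, is_derive t 1 (fun s => x s j 0) (dx j 0).
  by move=> j; apply: DeriveDef => //; rewrite hD mxE.
have := @is_derive_sum _ _ _ m.+1 (fun j s => w 0 j * x s j 0) t 1
   (fun j => w 0 j * dx j 0) (fun j => is_deriveZ (w 0 j) (di j)).
rewrite fct_sumE.
have -> : (fun s => (w *m x s) 0 0) = (fun s => \sum_(j < m.+1) w 0 j * x s j 0).
  by apply/funext => s; rewrite mxE.
by rewrite mxE.
Qed.
End Mx.


Section Cx.
Variable R : realType.
Variable m : nat.

Definition ReMx (c : 'rV[R[i]]_m.+1) : 'rV[R]_m.+1 := map_mx (@complex.Re R) c.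
Definition ImMx (c : 'rV[R[i]]_m.+1) : 'rV[R]_m.+1 := map_mx (@complex.Im R) c.
Definition toC (A : 'M[R]_m.+1) : 'M[R[i]]_m.+1 := map_mx (fun x : R => (x%:C)%C) A.

Lemma cReD (x y : R[i]) : complex.Re (x + y) = complex.Re x + complex.Re y.
Proof. by case: x => ? ?; case: y => ? ?. Qed.
Lemma cImD (x y : R[i]) : complex.Im (x + y) = complex.Im x + complex.Im y.
Proof. by case: x => ? ?; case: y => ? ?. Qed.
Lemma cRe0 : complex.Re (0 : R[i]) = 0. Proof. by []. Qed.
Lemma cIm0 : complex.Im (0 : R[i]) = 0. Proof. by []. Qed.

Lemma cReS (I : Type) (r : seq I) (f : I -> R[i]) :
  complex.Re (\sum_(k <- r) f k) = \sum_(k <- r) complex.Re (f k).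
Proof. by elim/big_rec2: _ => // k y1 y2 _ <-; rewrite cReD. Qed.
Lemma cImS (I : Type) (r : seq I) (f : I -> R[i]) :
  complex.Im (\sum_(k <- r) f k) = \sum_(k <- r) complex.Im (f k).
Proof. by elim/big_rec2: _ => // k y1 y2 _ <-; rewrite cImD. Qed.

Lemma cReMr (z : R[i]) (r : R) : complex.Re (z * (r%:C)%C) = complex.Re z * r.
Proof. case: z => a b /=; ring. Qed.
Lemma cImMr (z : R[i]) (r : R) : complex.Im (z * (r%:C)%C) = complex.Im z * r.
Proof. case: z => a b /=; ring. Qed.
Lemma cReMl (z w : R[i]) : complex.Re (z * w) =
  complex.Re z * complex.Re w - complex.Im z * complex.Im w.
Proof. by case: z => a b; case: w => c d. Qed.
Lemma cImMl (z w : R[i]) : complex.Im (z * w) =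
  complex.Re z * complex.Im w + complex.Im z * complex.Re w.
Proof. case: z => a b; case: w => c d /=; ring. Qed.

Lemma ReMx_mul (c : 'rV[R[i]]_m.+1) (A : 'M[R]_m.+1) : ReMx (c *m toC A) = ReMx c *m A.
Proof.
apply/matrixP => i j; rewrite !mxE cReS; apply: eq_bigr => k _.
by rewrite !mxE cReMr.
Qed.
Lemma ImMx_mul (c : 'rV[R[i]]_m.+1) (A : 'M[R]_m.+1) : ImMx (c *m toC A) = ImMx c *m A.
Proof.
apply/matrixP => i j; rewrite !mxE cImS; apply: eq_bigr => k _.
by rewrite !mxE cImMr.
Qed.
Lemma ReMx_add (c d : 'rV[R[i]]_m.+1) : ReMx (c + d) = ReMx c + ReMx d.
Proof. by apply/matrixP => i j; rewrite !mxE cReD. Qed.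
Lemma ImMx_add (c d : 'rV[R[i]]_m.+1) : ImMx (c + d) = ImMx c + ImMx d.
Proof. by apply/matrixP => i j; rewrite !mxE cImD. Qed.
Lemma ReMx_scale (l : R[i]) (c : 'rV[R[i]]_m.+1) :
  ReMx (l *: c) = complex.Re l *: ReMx c - complex.Im l *: ImMx c.
Proof. by apply/matrixP => i j; rewrite !mxE cReMl. Qed.
Lemma ImMx_scale (l : R[i]) (c : 'rV[R[i]]_m.+1) :
  ImMx (l *: c) = complex.Im l *: ReMx c + complex.Re l *: ImMx c.
Proof. by apply/matrixP => i j; rewrite !mxE cImMl addrC. Qed.
End Cx.


Section Traj.
Variable R : realType.
Variable m : nat.
Variables (A : 'M[R]_m.+1) (B : 'cV[R]_m.+1) (x : R -> 'cV[R]_m.+1).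
Hypothesis hx : forall t : R, is_derive t 1 x (A *m x t - B).

Definition Fr (r : 'rV[R]_m.+1) (s : R) := (r *m (A *m x s - B)) 0 0.

Lemma dF r (s : R) : is_derive s 1 (Fr r) (Fr (r *m A) s).
Proof.
have h1 := comp_deriv (r *m A) (hx s).
have h2 := is_deriveB h1 (is_derive_cst ((r *m B) 0 0) s 1).
have -> : Fr r = (fun s => ((r *m A) *m x s) 0 0) - cst ((r *m B) 0 0).
  by apply/funext => s'; rewrite /Fr [in RHS]/GRing.add /= mulmxBr mulmxA !mxE.
apply: is_derive_eq h2 _.
by rewrite subr0.
Qed.

Lemma FrD r1 r2 s : Fr (r1 + r2) s = Fr r1 s + Fr r2 s.
Proof. by rewrite /Fr mulmxDl mxE. Qed.
Lemma FrB r1 r2 s : Fr (r1 - r2) s = Fr r1 s - Fr r2 s.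
Proof. by rewrite /Fr mulmxBl !mxE. Qed.
Lemma FrZ k r s : Fr (k *: r) s = k * Fr r s.
Proof. by rewrite /Fr -scalemxAl mxE. Qed.

Lemma step (l : R[i]) (c : 'rV[R[i]]_m.+1) : complex.Re l < 0 ->
  tends0 (Fr (ReMx (c *m (toC A - l%:M)))) ->
  tends0 (Fr (ImMx (c *m (toC A - l%:M)))) ->
  tends0 (Fr (ReMx c)) /\ tends0 (Fr (ImMx c)).
Proof.
move=> l0 h1 h2.
set c' := c *m (toC A - l%:M) in h1 h2.
have hc : c *m toC A = l *: c + c'.
  by rewrite /c' mulmxBr mul_mx_scalar addrC subrK.
apply: (rot_tends0 (al := complex.Re l) (be := complex.Im l)) l0 _ _ h1 h2 => t.
  have := dF (ReMx c) t; rewrite -ReMx_mul hc ReMx_add ReMx_scale FrD FrB !FrZ.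
  done.
have := dF (ImMx c) t; rewrite -ImMx_mul hc ImMx_add ImMx_scale !FrD !FrZ.
done.
Qed.
End Traj.


Section Fin.
Variable R : realType.
Variable m : nat.
Variables (A : 'M[R]_m.+1) (B : 'cV[R]_m.+1) (x : R -> 'cV[R]_m.+1).
Hypothesis hx : forall t : R, is_derive t 1 x (A *m x t - B).

Definition Qp (p : {poly R[i]}) := forall c : 'rV[R[i]]_m.+1,
  tends0 (Fr A B x (ReMx (c *m horner_mx (toC A) p))) /\
  tends0 (Fr A B x (ImMx (c *m horner_mx (toC A) p))).

Lemma Qstep (s : seq R[i]) (p : {poly R[i]}) :
  (forall z, z \in s -> complex.Re z < 0) ->
  Qp (p * \prod_(z <- s) ('X - z%:P)) -> Qp p.
Proof.
elim: s p => [|z s IH] p hs hq; first by move: hq; rewrite big_nil mulr1.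
have hq' : Qp (p * ('X - z%:P)).
  apply: IH; first by move=> w ws; apply: hs; rewrite inE ws orbT.
  by move: hq; rewrite big_cons mulrA.
move=> c.
have hz : complex.Re z < 0 by apply: hs; rewrite inE eqxx.
apply: (step hx hz).
  have := (hq' c).1; rewrite rmorphM rmorphB /= horner_mx_X horner_mx_C.
  by rewrite -mulmxE mulmxA.
have := (hq' c).2; rewrite rmorphM rmorphB /= horner_mx_X horner_mx_C.
by rewrite -mulmxE mulmxA.
Qed.

Lemma Q1 : (forall z, root (char_poly (toC A)) z -> complex.Re z < 0) -> Qp 1.
Proof.
move=> hH.
have [rs hrs] := closed_field_poly_normal (char_poly (toC A)).
rewrite (monicP (char_poly_monic _)) scale1r in hrs.
apply: (@Qstep rs).
  by move=> z zs; apply: hH; rewrite hrs root_prod_XsubC.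
rewrite mul1r -hrs => c; rewrite Cayley_Hamilton.
have h0 : forall s, Fr A B x (ReMx (c *m 0)) s = 0 /\ Fr A B x (ImMx (c *m 0)) s = 0.
  by move=> s; rewrite mulmx0 /Fr; split; rewrite !mxE big1 // => j _; rewrite !mxE mul0r.
split => e e0; exists 0 => t _; by rewrite (proj1 (h0 t)) || rewrite (proj2 (h0 t)); rewrite normr0.
Qed.
End Fin.

Unset Implicit Arguments. Set Strict Implicit.

Theorem mainTheorem2 (R : realType) (m : nat) (a b : 'I_m.+1 -> R) :
  hurwitz (obsA a) -> 0 < b ord0 / a ord0 ->
  forall xi : 'cV[R]_m.+1, exit_defined (obsA a) (obsB b) (obsC R m) xi.
Proof.
move=> hH hdc xi x [_ hx].
have [c1 _] := Q1 hx hH (map_mx (fun x : R => (x%:C)%C) (delta_mx 0 0)).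
rewrite rmorph1 mulmx1 in c1.
have hre : ReMx (map_mx (fun x : R => (x%:C)%C) (delta_mx 0 0 : 'rV[R]_m.+1)) = delta_mx 0 0.
  by apply/matrixP => i j; rewrite !mxE.
rewrite hre in c1.
have b00 : b ord0 != 0 by apply: contraTneq hdc => ->; rewrite mul0r ltxx.
have a00 : a ord0 != 0 by apply: contraTneq hdc => ->; rewrite invr0 mulr0 ltxx.
have bn0 : 0 < `|b ord0| by rewrite normr_gt0.
have [T HT] := c1 `|b ord0| bn0.
exists (Num.max T 1); split; first by rewrite lt_max ltr01 orbT.
have := HT (Num.max T 1); rewrite le_max lexx => /(_ isT).
set t := Num.max T 1.
rewrite /Fr -rowE !mxE.
have s1 : \sum_j obsA a 0 j * x t j 0 = - a 0 * x t ord_max 0.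
  rewrite (bigD1 ord_max) //= big1 ?addr0; first by rewrite /obsA mxE eqxx.
  by move=> j hj; rewrite /obsA mxE (negbTE hj) /= mul0r.
have s2 : \sum_j obsC R m 0 j * x t j 0 = x t ord_max 0.
  rewrite (bigD1 ord_max) //= big1 ?addr0; first by rewrite /obsC mxE eqxx mul1r.
  by move=> j hj; rewrite /obsC mxE (negbTE hj) mul0r.
have o0 : (0 : 'I_m.+1) = ord0 by apply/val_inj.
rewrite s1 s2 o0.
set y := x t ord_max 0; set a0 := a ord0; set b0 := b ord0.
have ab : 0 < b0 * a0.
  have : b0 / a0 * (a0 * a0) = b0 * a0 by rewrite mulrA divfK.
  by move=> <-; apply: mulr_gt0 => //; rewrite lt_def mulf_neq0 //= -expr2 sqr_ge0.
have sq (z : R) : `|z| * `|z| = z * z.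
  by rewrite -normrM ger0_norm // -expr2 sqr_ge0.
move=> h.
have h2 : `|- a0 * y - b0| * `|- a0 * y - b0| < `|b0| * `|b0|.
  by apply: ltr_pM => //; apply: normr_ge0.
rewrite !sq in h2.
rewrite ltNge; apply/negP => y0.
have : 0 <= y * (a0 * a0 * y + 2 * (b0 * a0)).
  apply: mulr_ge0 => //; apply: addr_ge0; first by rewrite -expr2 mulr_ge0 // sqr_ge0.
  by rewrite mulr_ge0 // ltW.
nra.
Qed.
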